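(* Let $\mathcal{A}$ be a finite list of elements of $\mathbb{Z}^\ell$. The most degenerate constituent $f_{\rho_{\mathcal{A}}}(t)$ of the characteristic quasi-polynomial of $\mathcal{A}$ satisfies $$f_{\rho_{\mathcal{A}}}(t)=\chi^{\mathbb{C}^\times}_{\mathcal{A}}(t)=\chi^{\mathrm{arith}}_{\mathcal{A}}(t).$$
   Context: For a sublist $\mathcal{S}$ (distinguished by index), $r_{\mathcal{S}}$ is the rank of $\langle\mathcal{S}\rangle$; write $(\mathbb{Z}^\ell/\langle\mathcal{S}\rangle)_{\mathrm{tor}}\simeq\bigoplus_i\mathbb{Z}/d_{\mathcal{S},i}\mathbb{Z}$ with $d_{\mathcal{S},i}\mid d_{\mathcal{S},i+1}$, and $\rho_{\mathcal{A}}$ is the lcm over $\mathcal{S}$ of the largest $d_{\mathcal{S},i}$. The function $q\mapsto\#\{x\in(\mathbb{Z}/q\mathbb{Z})^\ell\mid\alpha(x)\neq0\ \forall\alpha\in\mathcal{A}\}$ is a quasi-polynomial with period $\rho_{\mathcal{A}}$ (Kamiya–Takemura–Terao); $f_{\rho_{\mathcal{A}}}(t)$ is the polynomial agreeing with it for all positive $q$ divisible by $\rho_{\mathcal{A}}$. $m(\mathcal{S};G)=\#\mathrm{Hom}((\mathbb{Z}^\ell/\langle\mathcal{S}\rangle)_{\mathrm{tor}},G)$, $\chi^G_{\mathcal{A}}(t)=\sum_{\mathcal{S}\subset\mathcal{A}}(-1)^{\#\mathcal{S}}m(\mathcal{S};G)t^{\ell-r_{\mathcal{S}}}$, and $\chi^{\mathrm{arith}}_{\mathcal{A}}(t)=\sum_{\mathcal{S}\subset\mathcal{A}}(-1)^{\#\mathcal{S}}m(\mathcal{S})t^{\ell-r_{\mathcal{S}}}$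 with $m(\mathcal{S})=\#(\mathbb{Z}^\ell/\langle\mathcal{S}\rangle)_{\mathrm{tor}}$. *)

(* Defs.v *)
From HB Require Import structures.
From mathcomp Require Import all_boot all_order all_algebra all_field.
From Stdlib Require Import ClassicalEpsilon.
Set Implicit Arguments. Unset Strict Implicit. Unset Printing Implicit Defensive.
Import Order.TTheory GRing.Theory Num.Theory.
Local Open Scope ring_scope.

(* A sublist S (distinguished by index) is a set I of indices of A.
   M_S is the l x (size A) integer matrix whose i-th column is A_i if i \in I
   and 0 otherwise; its column span is <S>. *)
Definition subMx (l : nat) (A : seq 'rV[int]_l) (I : {set 'I_(size A)}) :
  'M[int]_(l, size A) :=
  \matrix_(j < l, i < size A) (if i \in I then (A`_i) 0 j else 0).

Definition rankS (l : nat) (A : seq 'rV[int]_l) (I : {set 'I_(size A)}) : nat :=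
  \rank (map_mx (intr : int -> rat) (subMx I)).

(* Smith normal form diagonal of an integer matrix (from mathcomp's
   int_Smith_normal_form): M = L * diag(d) * R, L, R unimodular, d_i | d_{i+1}. *)
Definition snf_diag (m n : nat) (M : 'M[int]_(m, n)) : seq int :=
  s2val (projT3 (projT3 (int_Smith_normal_form M))).

(* The invariant factors d_{S,1} | d_{S,2} | ... of the torsion part
   (Z^l/<S>)_tor ~= (+)_i Z/d_{S,i}Z : the nonzero diagonal SNF entries
   (in absolute value; entries equal to 1 contribute trivial summands). *)
Definition torsion_factors (l : nat) (A : seq 'rV[int]_l)
    (I : {set 'I_(size A)}) : seq nat :=
  [seq `|x|%N | x <- take (minn l (size A)) (snf_diag (subMx I)) & x != 0].

Definition mS (l : nat) (A : seq 'rV[int]_l) (I : {set 'I_(size A)}) : nat :=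
  \prod_(d <- torsion_factors I) d.

Definition largest_factor (l : nat) (A : seq 'rV[int]_l)
    (I : {set 'I_(size A)}) : nat :=
  foldr maxn 1 (torsion_factors I).

Definition rhoA (l : nat) (A : seq 'rV[int]_l) : nat :=
  \big[lcmn/1%N]_(I : {set 'I_(size A)}) largest_factor I.

Definition fincard (T : eqType) (P : T -> Prop) : nat :=
  epsilon (inhabits 0%N)
    (fun n => exists s : seq T, [/\ uniq s, (forall x, P x <-> x \in s) & size s = n]).

(* #Hom((+)_i Z/d_i Z, C^x): a homomorphism out of (+)_i Z/d_i Z is the same as
   a choice of images z_i in C^x of the generators with z_i^{d_i} = 1. *)
Definition homCx (d : seq nat) : nat :=
  fincard (fun z : seq algC =>
    size z = size d /\ forall i, (i < size d)%N -> z`_i != 0 /\ z`_i ^+ (nth 0%N d i) = 1).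

Definition mSCx (l : nat) (A : seq 'rV[int]_l) (I : {set 'I_(size A)}) : nat :=
  homCx (torsion_factors I).

Definition chiCx (l : nat) (A : seq 'rV[int]_l) : {poly int} :=
  \sum_(I : {set 'I_(size A)})
     ((-1) ^+ #|I| * (mSCx I)%:R) *: 'X^(l - rankS I).

Definition chiArith (l : nat) (A : seq 'rV[int]_l) : {poly int} :=
  \sum_(I : {set 'I_(size A)})
     ((-1) ^+ #|I| * (mS I)%:R) *: 'X^(l - rankS I).

Definition charQP (l : nat) (A : seq 'rV[int]_l) (q : nat) : nat :=
  #|[set x : {ffun 'I_l -> 'I_q} |
      all (fun a : 'rV[int]_l =>
             ~~ ((q%:Z) %| \sum_(j < l) a 0 j * (x j : nat)%:Z)%Z) A]|.

(* Main.v *)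
Require Import Defs.
From HB Require Import structures.
From mathcomp Require Import all_boot all_order all_algebra all_field.
From Stdlib Require Import ClassicalEpsilon.
Import GRing.Theory.
Local Open Scope ring_scope.

Module Helpers.
Set Implicit Arguments. Unset Strict Implicit. Unset Printing Implicit Defensive.
Import Order.TTheory GRing.Theory Num.Theory.

Lemma fincard_eq (T : eqType) (P : T -> Prop) (s : seq T) :
  uniq s -> (forall x, P x <-> x \in s) -> fincard P = size s.
Proof.
move=> us Ps; rewrite /fincard.
have ex : exists n, exists s0 : seq T,
   [/\ uniq s0, (forall x, P x <-> x \in s0) & size s0 = n] by exists (size s), s.
have := epsilon_spec (inhabits 0%N) _ ex.
case=> s' [us' Ps' <-].
apply/perm_size/uniq_perm => // x; apply/idP/idP => H.
  by apply/Ps; apply/Ps'.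
by apply/Ps'; apply/Ps.
Qed.

Definition rlist (k : nat) : seq algC :=
  if k is k'.+1 then
    [seq (sval (C_prim_root_exists (ltn0Sn k'))) ^+ i | i <- iota 0 k'.+1]
  else [::].

Lemma rlistP k : (0 < k)%N ->
  uniq (rlist k) /\ size (rlist k) = k /\ forall x, (x ^+ k == 1) = (x \in rlist k).
Proof.
case: k => // k _; rewrite /rlist.
case: (C_prim_root_exists (ltn0Sn k)) => z pz.
split; [|split].
- rewrite map_inj_in_uniq ?iota_uniq // => i j; rewrite !mem_iota !add0n => ii jj.
  move/eqP; rewrite (eq_prim_root_expr pz) !modn_small //; exact/eqP.
- by rewrite size_map size_iota.
- move=> x; apply/eqP/mapP.
    move=> /(prim_rootP pz) [i ->]; exists (i : nat) => //.
    by rewrite mem_iota add0n ltn_ord.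
  by case=> i _ ->; rewrite exprAC (prim_expr_order pz) expr1n.
Qed.

Fixpoint homlist (d : seq nat) : seq (seq algC) :=
  match d with
  | [::] => [:: [::]]
  | k :: d' => [seq x :: z | x <- rlist k, z <- homlist d']
  end.

Definition Hprop (d : seq nat) (z : seq algC) :=
  size z = size d /\ forall i, (i < size d)%N -> z`_i != 0 /\ z`_i ^+ (nth 0%N d i) = 1.

Lemma homlistP d : all (fun k => 0 < k)%N d ->
  [/\ uniq (homlist d), size (homlist d) = \prod_(k <- d) k
    & forall z, Hprop d z <-> z \in homlist d].
Proof.
elim: d => [|k d IH] /=.
  split => //; first by rewrite big_nil.
  move=> z; rewrite inE; split; first by case=> /size0nil ->.
  by move/eqP=> ->; split.
case/andP=> k0 /IH [u1 s1 m1].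
have [ur [sr mr]] := rlistP k0.
split.
- rewrite allpairs_uniq //; case=> a b [c e] _ _ /= [-> ->] //.
- by rewrite size_allpairs sr s1 big_cons.
- case=> [|x z].
    split; first by case.
    by case/allpairsP=> [[a b] /= [_ _]].
  split.
  + case=> /= [[sz] H]; apply/allpairsP; exists (x, z) => /=; split => //.
      have [_ /eqP] := H 0%N isT; by rewrite mr.
    apply/m1; split => // i iz; exact: (H i.+1).
  + case/allpairsP=> [[a b] /= [ai bi [-> ->]]].
    have [sb Hb] := m1 b; case: (Hb bi) => sz Hz.
    split; first by rewrite /= sz.
    case=> [|i] /=; last by rewrite ltnS; exact: Hz.
    move=> _; rewrite -mr in ai; move/eqP: ai => ak; split => //.
    apply/eqP => a0; move: ak; rewrite a0 expr0n; case: k k0 {mr sr ur} => // k _ /=.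
    by move/eqP; rewrite eq_sym oner_eq0.
Qed.

Lemma homCxE d : all (fun k => 0 < k)%N d -> homCx d = \prod_(k <- d) k.
Proof.
case/homlistP=> u s m; rewrite /homCx -s; apply: fincard_eq => //.
Qed.


Lemma cardR (T : finType) (Q : pred T) :
  (#|[set x | Q x]|%:R : int) = \sum_x (Q x)%:R.
Proof.
rewrite -sum1_card natr_sum big_mkcond /=; apply: eq_bigr => x _.
by rewrite inE; case: (Q x).
Qed.

Lemma prod_bool (I : finType) (J : pred I) (a : I -> bool) :
  \prod_(i in J) ((a i)%:R : int) = ([forall i in J, a i])%:R.
Proof.
case: (boolP [forall i in J, a i]) => [/forall_inP H | H].
  by rewrite big1 // => i /H ->.
move/forallPn: H => [i]; rewrite negb_imply => /andP [iJ ai].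
by rewrite (bigD1 i) //= (negbTE ai) mul0r.
Qed.

Lemma incl_excl (T : finType) (n : nat) (P : 'I_n -> T -> bool) :
  (#|[set x | [forall i, ~~ P i x]]|%:R : int) =
  \sum_(I : {set 'I_n}) (-1) ^+ #|I| * (#|[set x | [forall i in I, P i x]]|%:R).
Proof.
rewrite cardR.
under eq_bigr => x _.
  have -> : ([forall i, ~~ P i x])%:R = \prod_i (- ((P i x)%:R : int) + 1).
    have := prod_bool predT (fun i => ~~ P i x).
    move=> <-; apply: eq_bigr => i _; by case: (P i x); rewrite ?addNr ?oppr0 ?add0r.
  rewrite bigA_distr.
  over.
rewrite exchange_big /=; apply: eq_bigr => J _.
rewrite cardR mulr_sumr; apply: eq_bigr => x _.
by rewrite -big_mkcond /= prodrN prod_bool.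
Qed.


Definition Dmx l n (d : seq int) : 'M[int]_(l, n) :=
  \matrix_(i, j) (d`_i *+ (i == j :> nat)).

Lemma snf_data l n (M : 'M[int]_(l, n)) : exists L R,
  [/\ L \in unitmx, R \in unitmx, sorted dvdz (snf_diag M)
    & M = L *m Dmx l n (snf_diag M) *m R].
Proof.
rewrite /snf_diag; case: (int_Smith_normal_form M) => L uL [R uR [d sd dM]] /=.
by exists L, R.
Qed.

Lemma downward_prefix (p : nat -> bool) l :
  (forall i j, (i <= j)%N -> p j -> p i) ->
  exists2 r, (r <= l)%N & forall i, (i < l)%N -> p i = (i < r)%N.
Proof.
move=> dc; elim: l => [|l [r rl IH]]; first by exists 0%N.
case: (boolP (p l)) => pl.
  exists l.+1 => // i il; rewrite il; apply: (dc i l) => //.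
exists r; first exact: leqW.
move=> i il; case: (ltngtP i l) => [ilt | igt | ->]; first exact: IH.
  by rewrite ltnS leqNgt igt in il.
by rewrite (negbTE pl) ltnNge rl.
Qed.

Lemma snf_prefix (d : seq int) l n : sorted dvdz d ->
  exists2 r, (r <= minn l n)%N &
    forall i, (i < l)%N -> ((i < n)%N && (d`_i != 0)) = (i < r)%N.
Proof.
move=> sd.
have dc : forall i j, (i <= j)%N -> (j < n)%N && (d`_j != 0) -> (i < n)%N && (d`_i != 0).
  move=> i j ij /andP [jn dj]; rewrite (leq_ltn_trans ij jn) /=.
  have js : (j < size d)%N by rewrite ltnNge; apply: contra dj => /(nth_default 0) ->.
  move: ij; rewrite leq_eqVlt => /orP [/eqP -> // | ij].
  have := sorted_ltn_nth dvdz_trans 0 sd; move/(_ i j) => H.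
  have : (d`_i %| d`_j)%Z by apply: H => //; rewrite inE (ltn_trans ij js).
  by apply: contraTneq => ->; rewrite dvd0z.
have [r rl H] := downward_prefix l dc.
exists r => //; rewrite leq_min rl /=.
rewrite leqNgt; apply/negP => nr.
have nl : (n < l)%N by apply: leq_trans nr rl.
by move: (H n nl); rewrite nr ltnn.
Qed.

Lemma map_unit_int (R : comUnitRingType) k (A : 'M[int]_k) :
  A \in unitmx -> map_mx (intr : int -> R) A \in unitmx.
Proof. rewrite !unitmxE det_map_mx; exact: rmorph_unit. Qed.

Lemma rank_unitl (F : fieldType) m n (U : 'M[F]_m) (A : 'M[F]_(m, n)) :
  U \in unitmx -> \rank (U *m A) = \rank A.
Proof.
move=> uU; rewrite -mxrank_tr trmx_mul mxrankMfree ?mxrank_tr //.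
by rewrite row_free_unit unitmx_tr.
Qed.

Lemma rank_unitr (F : fieldType) m n (U : 'M[F]_n) (A : 'M[F]_(m, n)) :
  U \in unitmx -> \rank (A *m U) = \rank A.
Proof. by move=> uU; rewrite mxrankMfree // row_free_unit. Qed.

Lemma rank_snf l n (M : 'M[int]_(l, n)) L R (d : seq int) r :
  L \in unitmx -> R \in unitmx -> M = L *m Dmx l n d *m R ->
  (r <= minn l n)%N ->
  (forall i, (i < l)%N -> ((i < n)%N && (d`_i != 0)) = (i < r)%N) ->
  \rank (map_mx (intr : int -> rat) M) = r.
Proof.
move=> uL uR -> rmin Hr.
rewrite !map_mxM rank_unitr ?map_unit_int // rank_unitl ?map_unit_int //.
pose c : 'rV[rat]_l := \row_i (if (i < r)%N then (d`_i)%:~R else 1).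
have -> : map_mx (intr : int -> rat) (Dmx l n d) = diag_mx c *m pid_mx r.
  apply/matrixP => i j; rewrite mul_diag_mx !mxE.
  case: (eqVneq (i : nat) j) => [ij | ij]; last by rewrite mulr0n mulr0.
  rewrite mulr1n /= ij.
  have := Hr i (ltn_ord i); rewrite ij (ltn_ord j) /=.
  case: (ltnP j r) => jr; first by move=> _; rewrite mulr1.
  by move/negbFE/eqP => ->; rewrite mulr0.
rewrite rank_unitl; last first.
  rewrite unitmxE det_diag unitfE; apply/prodf_neq0 => i _; rewrite mxE.
  case: ifP => ir; last exact: oner_neq0.
  rewrite intr_eq0; have := Hr i (ltn_ord i); rewrite ir => /andP [].
  done.
by rewrite rank_pid_mx //; move: rmin; rewrite leq_min => /andP [].
Qed.


Lemma card_bij (T : finType) (f g : T -> T) (P : pred T) :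
  cancel f g -> cancel g f -> #|[set x | P (f x)]| = #|[set x | P x]|.
Proof.
move=> fK gK; rewrite -(card_imset _ (can_inj fK)); congr (#|pred_of_set _|).
apply/setP => y; rewrite inE; apply/imsetP/idP => [[x]|Py].
  by rewrite inE => Pfx ->.
by exists (g y); rewrite ?inE gK.
Qed.

Lemma sum_mult (e D : nat) : (0 < e)%N ->
  (\sum_(0 <= a < e * D) (e %| a))%N = D.
Proof.
move=> e0; elim: D => [|D IH]; first by rewrite muln0 big_geq.
rewrite mulnS addnC (big_cat_nat _ (leq_addr _ _)) //= IH.
rewrite -{1}(add0n (e * D)%N) big_addn addKn.
rewrite big_ltn // add0n dvdn_mulr // big1_seq ?addn0 ?addn1 //.
move=> i; rewrite mem_index_iota => ie0.
case/and3P: ie0 => _ i1 ie.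
rewrite dvdn_addl ?dvdn_mulr //.
case: (boolP (e %| i)%N) => // /(dvdn_leq i1); rewrite leqNgt ie.
done.
Qed.

Lemma card_mult (e D : nat) : (0 < e)%N ->
  #|[pred a : 'I_(e * D) | (e %| a)%N]| = D.
Proof.
move=> e0; transitivity (\sum_(0 <= a < e * D) (e %| a))%N; last exact: sum_mult.
rewrite big_mkord -sum1_card big_mkcond /=.
by apply: eq_bigr => i _; rewrite inE; case: (e %| i)%N.
Qed.

Lemma dvd_Zp k (z : int) : (((k.+2)%:Z %| z)%Z) = (z%:~R == 0 :> 'Z_(k.+2)).
Proof.
have H : forall m : nat, ((k.+2 %| m)%N) = (m%:R == 0 :> 'Z_(k.+2)).
  by move=> m; rewrite -(inj_eq val_inj) /= val_Zp_nat.
case: z => m; first by rewrite dvdzE /= H.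
by rewrite NegzE rmorphN /= oppr_eq0 dvdzE /= H.
Qed.

Definition tfl l n (d : seq int) : seq nat :=
  [seq `|x|%N | x <- take (minn l n) d & x != 0].

Lemma prod_tf l n (d : seq int) r : (r <= minn l n)%N ->
  (forall i, (i < l)%N -> ((i < n)%N && (d`_i != 0)) = (i < r)%N) ->
  (\prod_(k <- tfl l n d) k)%N =
  (\prod_(i < r) absz (nth 0%R d i))%N.
Proof.
move=> rmin Hr.
set K := minn l n.
have Hr' : forall i, (i < K)%N -> (d`_i != 0) = (i < r)%N.
  move=> i; rewrite leq_min => /andP [il iN]; by rewrite -Hr // iN.
have rs : (r <= size d)%N.
  clear Hr; case: r rmin Hr' => // r rmin Hr'.
  have := Hr' r (leq_trans (ltnSn r) rmin); rewrite ltnSn.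
  by rewrite ltnNge; apply: contraNN => /(nth_default 0) ->; rewrite eqxx.
rewrite big_map big_filter (big_nth 0) size_take_min.
rewrite big_mkord.
have rK : (r <= minn K (size d))%N by rewrite leq_min rmin rs.
rewrite (big_ord_widen_cond (minn K (size d)) xpredT (fun i => absz (nth 0%R d i)) rK) /=.
have iK : forall i : 'I_(minn K (size d)), (i < K)%N.
  by move=> i; apply: (leq_trans (ltn_ord i)); rewrite geq_minl.
apply: eq_big => i; first by rewrite nth_take ?iK // Hr' ?iK.
by move=> _; rewrite nth_take ?iK.
Qed.


Lemma card_mult' N (e D : nat) : (0 < e)%N -> N = (e * D)%N ->
  #|[pred a : 'I_N | (e %| a)%N]| = D.
Proof. by move=> e0 ->; exact: card_mult. Qed.

Lemma mulmx_unit_eq0 (Rg : comUnitRingType) m n (A : 'M[Rg]_(m, n)) U :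
  U \in unitmx -> (A *m U == 0) = (A == 0).
Proof.
move=> uU; apply/eqP/eqP => [H|->]; last by rewrite mul0mx.
by rewrite -(mulmxK uU A) H mul0mx.
Qed.

Section Count.
Variables (l n k : nat) (M : 'M[int]_(l, n)) (L : 'M[int]_l) (R : 'M[int]_n)
  (d : seq int) (r : nat).
Hypotheses (uL : L \in unitmx) (uR : R \in unitmx)
  (dM : M = L *m Dmx l n d *m R) (rmin : (r <= minn l n)%N)
  (Hr : forall i, (i < l)%N -> ((i < n)%N && (d`_i != 0)) = (i < r)%N)
  (Hdv : forall i, (i < r)%N -> (absz (nth 0%R d i) %| k.+2)%N).

Local Notation p := k.+2.
Definition rowv (x : {ffun 'I_l -> 'I_p}) : 'rV['Z_p]_l := \row_j (x j : 'Z_p).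
Local Notation mq A := (map_mx (intr : int -> 'Z_p) A).

Lemma cond_row (x : {ffun 'I_l -> 'I_p}) (i : 'I_n) :
  (((p%:Z) %| \sum_(j < l) M j i * (x j : nat)%:Z)%Z) = ((rowv x *m mq M) 0 i == 0).
Proof.
rewrite dvd_Zp rmorph_sum !mxE; congr (_ == 0); apply: eq_bigr => j _.
rewrite rmorphM /= !mxE mulrC; congr (_ * _).
exact: natr_Zp.
Qed.

Lemma count_Zp :
  #|[set x : {ffun 'I_l -> 'I_p} |
     [forall i : 'I_n, ((p%:Z) %| \sum_(j < l) M j i * (x j : nat)%:Z)%Z]]|
  = (\prod_(i < r) absz (nth 0%R d i) * p ^ (l - r))%N.
Proof.
have uLq : mq L \in unitmx by apply: map_unit_int.
have uRq : mq R \in unitmx by apply: map_unit_int.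
have -> : [set x : {ffun 'I_l -> 'I_p} |
     [forall i : 'I_n, ((p%:Z) %| \sum_(j < l) M j i * (x j : nat)%:Z)%Z]]
   = [set x | rowv x *m mq L *m mq (Dmx l n d) == 0].
  apply/setP => x; rewrite !inE -(mulmx_unit_eq0 _ uRq) -!mulmxA -!map_mxM !mulmxA -dM.
  apply/forallP/eqP => [H | H].
    by apply/rowP => i; rewrite [RHS]mxE; apply/eqP; rewrite -cond_row; exact: H.
  by move=> i; rewrite cond_row H mxE.
pose phi (x : {ffun 'I_l -> 'I_p}) : {ffun 'I_l -> 'I_p} :=
  [ffun j => ((rowv x *m mq L) 0 j : 'I_p)].
pose psi (x : {ffun 'I_l -> 'I_p}) : {ffun 'I_l -> 'I_p} :=
  [ffun j => ((rowv x *m invmx (mq L)) 0 j : 'I_p)].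
have rphi x : rowv (phi x) = rowv x *m mq L.
  by apply/rowP => j; rewrite /rowv [LHS]mxE ffunE.
have rpsi x : rowv (psi x) = rowv x *m invmx (mq L).
  by apply/rowP => j; rewrite /rowv [LHS]mxE ffunE.
have rowvK x : [ffun j => rowv x 0 j] = x by apply/ffunP => j; rewrite !ffunE mxE.
have rowv_inj : injective rowv by move=> x y H; rewrite -(rowvK x) -(rowvK y) H.
have phiK : cancel phi psi.
  by move=> x; apply: rowv_inj; rewrite rpsi rphi mulmxK.
have psiK : cancel psi phi.
  by move=> x; apply: rowv_inj; rewrite rphi rpsi mulmxKV.
have -> : [set x | rowv x *m mq L *m mq (Dmx l n d) == 0]
   = [set x | (fun y => rowv y *m mq (Dmx l n d) == 0) (phi x)].
  by apply/setP => x; rewrite !inE rphi.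
rewrite (card_bij (fun x => rowv x *m mq (Dmx l n d) == 0) phiK psiK).
pose Q (i : 'I_l) := [pred a : 'I_p | (i < r)%N ==> ((a : 'Z_p) * (d`_i)%:~R == 0)].
have rn : (r <= n)%N by move: rmin; rewrite leq_min => /andP [].
have -> : [set x | rowv x *m mq (Dmx l n d) == 0] = [set x in family Q].
  apply/setP => x; rewrite !inE /Dmx; apply/eqP/familyP => [H i | H].
    rewrite inE; apply/implyP => ir.
    have iN : (i < n)%N by apply: leq_trans ir rn.
    have := congr1 (fun A : 'rV['Z_p]_n => A 0 (Ordinal iN)) H; rewrite !mxE (bigD1 i) //= big1.
      by rewrite !mxE eqxx mulr1n addr0 => ->.
    move=> i' ii'; rewrite !mxE /=.
    have -> : (i' == i :> nat) = false by apply/negbTE; rewrite (inj_eq val_inj).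
    by rewrite mulr0n mulr0.
  apply/rowP => j; rewrite !mxE; apply: big1 => i _; rewrite !mxE.
  case: (eqVneq (i : nat) j) => [ij | ij]; last by rewrite mulr0n mulr0.
  rewrite mulr1n; have := H i; rewrite inE.
  case: (ltnP i r) => ir; first by move/eqP.
  move=> _; have := Hr (ltn_ord i); rewrite ij ltn_ord /= -ij.
  rewrite ltnNge ir /= => /negbFE/eqP ->; by rewrite mulr0.
rewrite cardsE card_family foldrE big_map big_enum /=.
have cQ : forall i : 'I_l, #|Q i| = if (i < r)%N then absz (nth 0%R d i) else p.
  move=> i; case: (ltnP i r) => ir; last first.
    rewrite -[RHS](card_ord p); apply: eq_card => a; by rewrite !inE ltnNge ir.
  have dz : d`_i != 0 by have := Hr (ltn_ord i); rewrite ir => /andP [].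
  have D0 : (0 < absz (nth 0%R d i))%N by rewrite absz_gt0.
  have pe : p = (p %/ absz (nth 0%R d i) * absz (nth 0%R d i))%N by rewrite divnK // Hdv.
  have e0 : (0 < p %/ absz (nth 0%R d i))%N by rewrite divn_gt0 // dvdn_leq // Hdv.
  rewrite -(card_mult' e0 pe); apply: eq_card => a; rewrite !inE ir /=.
  have key : forall m, (p %| m * absz (nth 0%R d i))%N = (p %/ absz (nth 0%R d i) %| m)%N.
    by move=> m; rewrite {1}pe dvdn_pmul2r.
  rewrite -[X in X * _](natr_Zp a) pmulrn -intrM -dvd_Zp dvdzE abszM /=.
  exact: key.
rewrite (eq_bigr _ (fun i _ => cQ i)).
have rl : (r <= l)%N by move: rmin; rewrite leq_min => /andP [].
rewrite -(big_mkord xpredT (fun i => if (i < r)%N then absz (nth 0%R d i) else p)).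
rewrite -(big_mkord xpredT (fun i => absz (nth 0%R d i))).
rewrite (@big_cat_nat _ _ _ r 0 l) //=; congr (_ * _)%N.
  by apply: eq_big_nat => i /andP [_ ->].
rewrite -(prod_nat_const_nat r l p); apply: eq_big_nat => i /andP [ri _].
by rewrite ltnNge ri.
Qed.
End Count.


Lemma dvd_foldr_max (s : seq nat) : sorted dvdn s -> all (fun k => 0 < k)%N s ->
  forall x, x \in s -> (x %| foldr maxn 1 s)%N.
Proof.
elim: s => // a s IH /= ss /andP [a0 sp] x.
have ss' : sorted dvdn s by move: ss; case: s {IH sp} => //= b s /andP [].
have IH' := IH ss' sp.
case: s ss IH' {IH ss' sp} => [|b s] /=.
  by move=> _ _; rewrite inE => /eqP ->; rewrite (maxn_idPl a0).
move=> /andP [ab _] IH'.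
have bm : (b %| foldr maxn 1 (b :: s))%N by apply: IH'; rewrite inE eqxx.
have m0 : (0 < foldr maxn 1 (b :: s))%N.
  by rewrite /= leq_max; apply/orP; right; elim: s {IH' bm} => //= c s H; rewrite leq_max H orbT.
have am : (a %| foldr maxn 1 (b :: s))%N by apply: dvdn_trans ab bm.
have -> : maxn a (maxn b (foldr maxn 1 s)) = foldr maxn 1 (b :: s).
  by apply/maxn_idPr; apply: dvdn_leq.
rewrite inE => /orP [/eqP -> // | xs]; exact: IH'.
Qed.

Lemma tfl_pos l n d : all (fun k => 0 < k)%N (tfl l n d).
Proof.
apply/allP => k /mapP [x]; rewrite mem_filter => /andP [nz _] ->.
by rewrite absz_gt0.
Qed.

Lemma tfl_sorted l n d : sorted dvdz d -> sorted dvdn (tfl l n d).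
Proof.
move=> sd; rewrite /tfl sorted_map.
apply: (sorted_filter dvdz_trans); exact: take_sorted.
Qed.

Lemma count_I l (A : seq 'rV[int]_l) (I : {set 'I_(size A)}) q :
  (0 < q)%N -> (rhoA A %| q)%N ->
  #|[set x : {ffun 'I_l -> 'I_q} |
     [forall i in I, ((q%:Z) %| \sum_(j < l) (A`_i) 0 j * (x j : nat)%:Z)%Z]]|
  = (mS I * q ^ (l - rankS I))%N.
Proof.
move=> q0 rq.
set n := size A.
have -> : [set x : {ffun 'I_l -> 'I_q} |
     [forall i in I, ((q%:Z) %| \sum_(j < l) (A`_i) 0 j * (x j : nat)%:Z)%Z]]
  = [set x : {ffun 'I_l -> 'I_q} |
     [forall i : 'I_n, ((q%:Z) %| \sum_(j < l) subMx I j i * (x j : nat)%:Z)%Z]].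
  apply/setP => x; rewrite !inE; apply: eq_forallb => i.
  case: (boolP (i \in I)) => iI /=.
    by congr (_ %| _)%Z; apply: eq_bigr => j _; rewrite mxE iI.
  by rewrite big1 ?dvdz0 // => j _; rewrite mxE (negbTE iI) mul0r.
have [L [R [uL uR sd dM]]] := snf_data (subMx I).
set d := snf_diag (subMx I) in sd dM.
have [r rmin Hr] := snf_prefix l n sd.
have rk : rankS I = r by apply: (rank_snf uL uR dM).
have mSE : mS I = (\prod_(i < r) absz (nth 0%R d i))%N.
  by rewrite -(prod_tf rmin Hr).
rewrite rk mSE.
have Hdv : forall i, (i < r)%N -> (absz (nth 0%R d i) %| q)%N.
  move=> i ir.
  have iK : (i < minn l n)%N by apply: leq_trans ir rmin.
  have dz : nth 0%R d i != 0.
    have il : (i < l)%N by apply: leq_trans iK (geq_minl _ _).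
    by have := Hr i il; rewrite ir => /andP [].
  have im : absz (nth 0%R d i) \in torsion_factors I.
    rewrite /torsion_factors; apply: map_f; rewrite mem_filter dz /=.
    rewrite -(nth_take 0%R iK); apply: mem_nth; rewrite size_take_min leq_min iK /=.
    by rewrite ltnNge; apply: contra dz => /(nth_default 0%R) ->.
  apply: dvdn_trans (dvd_foldr_max (tfl_sorted _ _ sd) (tfl_pos _ _ _) im) _.
  apply: dvdn_trans rq; rewrite /rhoA (bigD1 I) //=; exact: dvdn_lcml.
case: q q0 rq Hdv => // [[|k]] _ _ Hdv.
  rewrite big1 ?exp1n ?mul1n; last first.
    by move=> i _; apply/eqP; rewrite -dvdn1; exact: Hdv.
  set S := [set x | _].
  have -> : S = setT by apply/setP => x; rewrite !inE; apply/forallP => i; exact: dvd1z.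
  by rewrite cardsT card_ffun card_ord exp1n.
exact: (count_Zp uL uR dM rmin Hr Hdv).
Qed.

End Helpers.
Import Helpers.

Theorem mainTheorem12 (l : nat) (A : seq 'rV[int]_l) :
  (forall q : nat, (0 < q)%N -> (rhoA A %| q)%N ->
     (charQP A q)%:Z = (chiCx A).[q%:Z])
  /\ chiCx A = chiArith A.
Proof.
have mE : forall I : {set 'I_(size A)}, mSCx I = mS I.
  by move=> I; rewrite /mSCx homCxE //; exact: tfl_pos.
split; last first.
  by rewrite /chiCx /chiArith; apply: eq_bigr => I _; rewrite mE.
move=> q q0 rq.
rewrite /charQP.
set P := fun (i : 'I_(size A)) (x : {ffun 'I_l -> 'I_q}) =>
  ((q%:Z) %| \sum_(j < l) (A`_i) 0 j * (x j : nat)%:Z)%Z.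
have -> : [set x : {ffun 'I_l -> 'I_q} | all (fun a : 'rV[int]_l =>
             ~~ ((q%:Z) %| \sum_(j < l) a 0 j * (x j : nat)%:Z)%Z) A]
        = [set x | [forall i, ~~ P i x]].
  apply/setP => x; rewrite !inE; apply/(all_nthP 0)/forallP => [H i | H i iA].
    exact: H.
  exact: (H (Ordinal iA)).
rewrite -[LHS]natz incl_excl /chiCx horner_sum; apply: eq_bigr => I _.
rewrite hornerZ hornerXn mE count_I // natrM natrX mulrA.
congr (_ * _ ^+ _); exact: natz.
Qed.
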